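(* For every $n\equiv 5 \pmod{16}$ with $n\geq 21$, there exists an almost 2-perfect maximum 8-cycle packing of $K_n$.
   Context: An 8-cycle packing of $K_n$ on vertex set $\mathcal{X}$ is a triple $(\mathcal{X},\mathcal{C},\mathcal{L})$ with $\mathcal{C}$ a collection of pairwise edge-disjoint 8-cycles of $K_n$ and leave $\mathcal{L}$ the set of edges in no cycle of $\mathcal{C}$; it is maximum if $|\mathcal{L}|$ is minimum among all 8-cycle packings of $K_n$. For an 8-cycle $C$, an inside 8-cycle of $C$ is an 8-cycle on the same vertex set sharing no edge with $C$. The packing is almost 2-perfect if one can choose for each $C\in\mathcal{C}$ an inside 8-cycle $C'$ such that $(\mathcal{X},\{C'\},\mathcal{L})$ is again an 8-cycle packing with the same leave. *)

(* Defs.v *)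
From mathcomp Require Import all_boot.
Set Implicit Arguments. Unset Strict Implicit. Unset Printing Implicit Defensive.

Definition Kedges (n : nat) : {set {set 'I_n}} := [set e : {set 'I_n} | #|e| == 2].

Definition succ8 (i : 'I_8) : 'I_8 := inord ((i.+1) %% 8).

Definition cycle_edges n (t : 8.-tuple 'I_n) : {set {set 'I_n}} :=
  [set [set tnth t i; tnth t (succ8 i)] | i : 'I_8].

Definition is_8cycle n (C : {set {set 'I_n}}) : Prop :=
  exists t : 8.-tuple 'I_n, uniq t /\ C = cycle_edges t.

Definition vset n (C : {set {set 'I_n}}) : {set 'I_n} := \bigcup_(e in C) e.

Definition is_packing n (P : {set {set {set 'I_n}}}) : Prop :=
  (forall C, C \in P -> is_8cycle C) /\
  (forall C D, C \in P -> D \in P -> C != D -> [disjoint C & D]).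

Definition leave n (P : {set {set {set 'I_n}}}) : {set {set 'I_n}} :=
  Kedges n :\: \bigcup_(C in P) C.

Definition is_maximum n (P : {set {set {set 'I_n}}}) : Prop :=
  is_packing P /\
  forall P' : {set {set {set 'I_n}}}, is_packing P' -> #|leave P| <= #|leave P'|.

Definition inside_8cycle n (C C' : {set {set 'I_n}}) : Prop :=
  is_8cycle C' /\ vset C' = vset C /\ [disjoint C' & C].

Definition almost_2perfect n (P : {set {set {set 'I_n}}}) : Prop :=
  exists f : {set {set 'I_n}} -> {set {set 'I_n}},
    (forall C, C \in P -> inside_8cycle C (f C)) /\
    (forall C D, C \in P -> D \in P -> C != D -> [disjoint f C & f D]) /\
    leave [set f C | C in P] = leave P.

(* Main.v *)
Require Import Defs.
From mathcomp Require Import all_boot zify.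
Set Implicit Arguments. Unset Strict Implicit. Unset Printing Implicit Defensive.


Lemma succ8_val (i : 'I_8) : nat_of_ord (succ8 i) = (i.+1) %% 8.
Proof. by rewrite /succ8 (@inordK 7) // ltn_pmod. Qed.

Definition edge_seq n (x0 : 'I_n) (s : seq 'I_n) :=
  [seq [set nth x0 s i; nth x0 s ((i.+1) %% 8)] | i <- iota 0 8].

Lemma cycle_edgesE n (t : 8.-tuple 'I_n) (x0 : 'I_n) :
  cycle_edges t = [set e | e \in edge_seq x0 t].
Proof.
apply/setP => e; rewrite inE; apply/imsetP/mapP => [[i _ ->]|[i]].
  exists (val i); first by rewrite mem_iota /=.
  by rewrite !(tnth_nth x0) succ8_val.
rewrite mem_iota /= => Hi ->; exists (Ordinal Hi) => //.
by rewrite !(tnth_nth x0) succ8_val.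
Qed.

Lemma neq2 (T : finType) (a b c d : T) : a != c -> a != d -> [set a; b] != [set c; d].
Proof. move=> h1 h2; apply/eqP=> /setP/(_ a); rewrite !inE eqxx /= (negbTE h1) (negbTE h2). by []. Qed.
Lemma neq2' (T : finType) (a b c d : T) : b != c -> b != d -> [set a; b] != [set c; d].
Proof. by rewrite setUC; apply: neq2. Qed.

Lemma card_filter_set (T: finType) (s : seq T) (p : pred T) :
  uniq s -> #|[set x | (x \in s) && p x]| = count p s.
Proof.
move=> Us; rewrite -size_filter -(card_uniqP (filter_uniq p Us)).
by apply: eq_card => x; rewrite inE mem_filter andbC.
Qed.

Lemma orb_nat (x y : bool) : ~~ (x && y) -> ((x || y) : nat) = x + y.
Proof. by case: x; case: y. Qed.

Ltac split_hyps := repeat match goal with H : is_true (_ && _) |- _ => let h1 := fresh "h" in let h2 := fresh "h" in case/andP: H => h1 h2 end.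
Ltac neqs := solve [ apply: neq2; (assumption || by rewrite eq_sym) 
                   | apply: neq2'; (assumption || by rewrite eq_sym) ].

Lemma par8 (a b c d e f g h : bool) : ~~(a&&b) -> ~~(b&&c) -> ~~(c&&d) -> ~~(d&&e) ->
  ~~(e&&f) -> ~~(f&&g) -> ~~(g&&h) -> ~~(h&&a) ->
  ~~ odd ((a||b) + ((b||c) + ((c||d) + ((d||e) + ((e||f) + ((f||g) + ((g||h) + ((h||a) + 0)))))))).
Proof. by case: a; case: b; case: c; case: d; case: e; case: f; case: g; case: h. Qed.

Lemma cycle_props n (t : 8.-tuple 'I_n) : uniq t ->
  [/\ #|cycle_edges t| = 8, cycle_edges t \subset Kedges n &
      forall v, ~~ odd #|[set e in cycle_edges t | v \in e]| ].
Proof.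
rewrite (cycle_edgesE t (tnth t ord0)).
case: t => s Hs /=.
case: s Hs => [|s0 [|s1 [|s2 [|s3 [|s4 [|s5 [|s6 [|s7 [|? ?]]]]]]]]] Hs //.
rewrite /edge_seq /=; rewrite !inE !negb_or => U; split_hyps.
have U2 : uniq [:: [set s0; s1]; [set s1; s2]; [set s2; s3]; [set s3; s4]; [set s4; s5];
     [set s5; s6]; [set s6; s7]; [set s7; s0]].
  rewrite /= !inE !negb_or; repeat (apply/andP; split); try done; neqs.
split.
- by rewrite cardsE (card_uniqP U2).
- apply/subsetP => e; rewrite !inE; repeat case/orP; move/eqP->;
   rewrite cards2; match goal with |- context[?a != ?b] => (have ->: (a != b) by (done || by rewrite eq_sym)) end; done.
- move=> v.
  have -> : [set e in [set e | e \in [:: [set s0; s1]; [set s1; s2]; [set s2; s3]; [set s3; s4]; [set s4; s5];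
     [set s5; s6]; [set s6; s7]; [set s7; s0]]] | v \in e] = 
     [set e | (e \in [:: [set s0; s1]; [set s1; s2]; [set s2; s3]; [set s3; s4]; [set s4; s5];
     [set s5; s6]; [set s6; s7]; [set s7; s0]]) && (v \in e)].
    by apply/setP => e; rewrite !inE.
  rewrite card_filter_set // /= !inE.
  have key : forall x y : 'I_n, x != y -> ~~ ((v==x) && (v==y)).
    move=> x y nxy; apply/negP => /andP[/eqP Ex /eqP Ey].
    by rewrite -Ex -Ey eqxx in nxy.
  apply: par8; apply: key => //; by rewrite eq_sym.
Qed.


Definition star n (v : 'I_n) (A : {set {set 'I_n}}) := [set e in A | v \in e].

Lemma star_K n (v : 'I_n) : #|star v (Kedges n)| = n.-1.
Proof.
have -> : star v (Kedges n) = [set [set v; u] | u in [set~ v]].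
  apply/setP => e; rewrite !inE; apply/idP/imsetP.
  - case/andP => /cards2P [a [b [nab ->]]]; rewrite !inE => /orP [] /eqP ->.
    + by exists b; rewrite // !inE eq_sym.
    + by exists a; rewrite ?inE // setUC.
  - case=> u; rewrite !inE => nuv ->; rewrite cards2 !inE eqxx andbT.
    by rewrite (eq_sym v) nuv.
rewrite card_in_imset ?cardsC1 ?card_ord //.
move=> u w; rewrite !inE => nu nw /setP /(_ u); rewrite !inE eqxx (negbTE nu) /=.
by move/esym/eqP.
Qed.

Lemma cover_sub n (P : {set {set {set 'I_n}}}) : is_packing P -> cover P \subset Kedges n.
Proof.
case=> cyc _; apply/subsetP => e /bigcupP [C CP eC].
have [t [ut E]] := cyc C CP; rewrite E in eC; have [_ sub _] := cycle_props ut.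
by apply: (subsetP sub).
Qed.

Lemma pack_triv n (P : {set {set {set 'I_n}}}) : is_packing P -> trivIset P.
Proof. by case=> _ dis; apply/trivIsetP => A B AP BP; apply: dis. Qed.

Lemma card_leave n (P : {set {set {set 'I_n}}}) : is_packing P ->
  #|leave P| + 8 * #|P| = 'C(n, 2).
Proof.
move=> HP; have := pack_triv HP; rewrite /trivIset => /eqP.
rewrite (eq_bigr (fun _ => 8)); last first.
  move=> C CP; case: HP => cyc _; have [t [ut ->]] := cyc C CP.
  by have [] := cycle_props ut.
rewrite sum_nat_const => E.
rewrite /leave cardsD (setIidPr (cover_sub HP)) -/(cover P) -E mulnC.
have := subset_leq_card (cover_sub HP); rewrite -E.
rewrite /Kedges card_draws card_ord => le; rewrite subnK //.
by rewrite mulnC.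
Qed.

Lemma star_leave_even n (P : {set {set {set 'I_n}}}) (v : 'I_n) :
  is_packing P -> odd n -> ~~ odd #|star v (leave P)|.
Proof.
move=> HP on.
have E1 : #|star v (Kedges n) :&: cover P| + #|star v (Kedges n) :\: cover P| = n.-1.
  by rewrite cardsID star_K.
have -> : star v (leave P) = star v (Kedges n) :\: cover P.
  by apply/setP => e; rewrite !inE andbA.
have E2 : star v (Kedges n) :&: cover P = [set e | (e \in cover P) && (v \in e)].
  apply/setP => e; rewrite !inE; case ec: (e \in cover P); rewrite ?andbF //=.
  by have := subsetP (cover_sub HP) e ec; rewrite inE => ->; rewrite ?andbT.
have E3 : #|[set e | (e \in cover P) && (v \in e)]| = \sum_(C in P) #|star v C|.
  rewrite -sum1dep_card (big_trivIset_cond _ (pack_triv HP)) /=.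
  by apply: eq_bigr => C _; rewrite sum1dep_card.
have ev : ~~ odd (\sum_(C in P) #|star v C|).
  apply: (big_ind (fun x => ~~ odd x)) => //; first by move=> x y ox oy; rewrite oddD (negbTE ox) (negbTE oy).
  move=> C CP; case: HP => cyc _; have [t [ut ->]] := cyc C CP.
  by have [_ _ H] := cycle_props ut; apply: H.
move: E1; rewrite E2 E3 => E1.
have : ~~ odd n.-1 by case: n on {E1 P HP v E2 E3 ev} => //= m; rewrite negbK.
by rewrite -E1 oddD (negbTE ev).
Qed.

Lemma lower n (P : {set {set {set 'I_n}}}) : is_packing P -> odd n ->
  'C(n, 2) %% 8 = 2 -> 10 <= #|leave P|.
Proof.
move=> HP on Cm.
have CL := card_leave HP.
have [L2|] : #|leave P| = 2 \/ 10 <= #|leave P| by lia.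
  2: by [].
have LK : leave P \subset Kedges n by apply: subsetDl.
have L2' := L2.
move/eqP: L2 => /cards2P [e1 [e2 [ne ELP]]].
have e1K : e1 \in Kedges n by apply: (subsetP LK); rewrite ELP !inE eqxx.
have e2K : e2 \in Kedges n by apply: (subsetP LK); rewrite ELP !inE eqxx orbT.
have inE2 : forall w, w \in e1 -> w \in e2.
  move=> w we1.
  have ev := star_leave_even w HP on.
  have sub : star w (leave P) \subset leave P by apply/subsetP => e; rewrite inE => /andP[].
  have e1s : e1 \in star w (leave P) by rewrite inE we1 andbT ELP !inE eqxx.
  have le2 : #|star w (leave P)| <= 2 by rewrite -L2'; apply: subset_leq_card.
  have gt0 : 0 < #|star w (leave P)| by apply/card_gt0P; exists e1.
  have c2 : #|star w (leave P)| = 2.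
    move: ev le2 gt0; case: #|star w (leave P)| => [|[|[|k]]] //.
  have eq : star w (leave P) = leave P by apply/eqP; rewrite eqEcard sub c2 L2'.
  have : e2 \in star w (leave P) by rewrite eq ELP !inE eqxx orbT.
  by rewrite inE => /andP[].
move: e1K e2K; rewrite !inE => c1 c2.
have : e1 == e2 by rewrite eqEcard (eqP c1) (eqP c2) leqnn andbT; apply/subsetP.
by rewrite (negbTE ne).
Qed.


Definition vt n (x0 : 'I_n) (v : nat) : 'I_n := insubd x0 v.

Lemma vtK n (x0 : 'I_n) v : v < n -> nat_of_ord (vt x0 v) = v.
Proof. by move=> h; rewrite /vt val_insubd h. Qed.

Lemma vt_inj n (x0 : 'I_n) a b : a < n -> b < n -> vt x0 a = vt x0 b -> a = b.
Proof. by move=> ha hb E; rewrite -(vtK x0 ha) -(vtK x0 hb) E. Qed.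

Definition mkT n (x0 : 'I_n) (f : nat -> nat) : 8.-tuple 'I_n := [tuple vt x0 (f i) | i < 8].

Definition cyc (C : eqType) n (x0 : 'I_n) (vtx : C -> nat -> nat) (c : C) :=
  cycle_edges (mkT x0 (vtx c)).

Definition nxt (i : nat) := (i.+1) %% 8.

Lemma cycE (C : eqType) n (x0 : 'I_n) (vtx : C -> nat -> nat) (c : C) e :
  (e \in cyc x0 vtx c) = [exists i : 'I_8, e == [set vt x0 (vtx c i); vt x0 (vtx c (nxt i))]].
Proof.
apply/imsetP/existsP => [[i _ ->]|[i /eqP ->]]; exists i;
  by rewrite ?inE // !tnth_mktuple succ8_val.
Qed.

Lemma set2_eq (T : finType) (X Y A B : T) : [set X; Y] = [set A; B] ->
  (X = A /\ Y = B) \/ (X = B /\ Y = A).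
Proof.
move=> E.
have hX : X \in [set A; B] by rewrite -E !inE eqxx.
have hY : Y \in [set A; B] by rewrite -E !inE eqxx orbT.
have hA : A \in [set X; Y] by rewrite E !inE eqxx.
have hB : B \in [set X; Y] by rewrite E !inE eqxx orbT.
move: hX hY hA hB; rewrite !inE.
by do 4 (case/orP => /eqP ?); subst; auto.
Qed.

Definition epair (x y a b : nat) := ((a == x) && (b == y)) || ((a == y) && (b == x)).

Lemma set2_vt n (x0 : 'I_n) x y a b : x < n -> y < n -> a < n -> b < n ->
  ([set vt x0 x; vt x0 y] == [set vt x0 a; vt x0 b]) = epair x y a b.
Proof.
move=> hx hy ha hb; apply/eqP/idP.
- move/set2_eq => [[E1 E2]|[E1 E2]].
  + have e1 := vt_inj hx ha E1; have e2 := vt_inj hy hb E2.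
    by rewrite /epair e1 e2 !eqxx.
  + have e1 := vt_inj hx hb E1; have e2 := vt_inj hy ha E2.
    by rewrite /epair e1 e2 !eqxx orbT.
- by rewrite /epair => /orP [] /andP [/eqP -> /eqP ->] //; rewrite setUC.
Qed.

Lemma uniq_map_iota (f : nat -> nat) k i j : uniq [seq f i | i <- iota 0 k] ->
  i < k -> j < k -> f i = f j -> i = j.
Proof.
move=> U hi hj E; apply/eqP.
have h := @nth_uniq _ 0 [seq f i | i <- iota 0 k] i j; rewrite size_map size_iota in h.
by rewrite -(h hi hj U) !(nth_map 0) ?size_iota // !nth_iota // E.
Qed.

Definition ownS (C : Type) (own : nat -> nat -> C) (a b : nat) := own (minn a b) (maxn a b).

Definition fam_ok (C : eqType) n (codes : seq C) (vtx : C -> nat -> nat)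
  (own : nat -> nat -> C) (L0 : seq (nat * nat)) :=
  [/\ forall c, c \in codes -> forall i, i < 8 -> vtx c i < n,
      forall c, c \in codes -> uniq [seq vtx c i | i <- iota 0 8],
      forall c, c \in codes -> forall i, i < 8 -> ownS own (vtx c i) (vtx c (nxt i)) = c,
      forall x y, x < y -> y < n -> (x, y) \notin L0 ->
        own x y \in codes /\ exists2 i, i < 8 & epair x y (vtx (own x y) i) (vtx (own x y) (nxt i))
    & forall p, p \in L0 -> [/\ p.1 < p.2, p.2 < n & own p.1 p.2 \notin codes]].

Definition fam (C : eqType) n (x0 : 'I_n) (vtx : C -> nat -> nat) (codes : seq C)
  : {set {set {set 'I_n}}} := [set:: map (cyc x0 vtx) codes].
Definition L0set n (x0 : 'I_n) (L0 : seq (nat * nat)) : {set {set 'I_n}} :=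
  [set:: map (fun p => [set vt x0 p.1; vt x0 p.2]) L0].

Lemma nxt_lt i : nxt i < 8.
Proof. by rewrite /nxt ltn_pmod. Qed.


Lemma fam_cyc8 (C : eqType) n (x0 : 'I_n) codes vtx own L0 (H : @fam_ok C n codes vtx own L0) c :
  c \in codes -> is_8cycle (cyc x0 vtx c).
Proof.
case: H => Hb Hu _ _ _ cc; exists (mkT x0 (vtx c)); split => //.
rewrite -map_tnth_enum map_inj_uniq ?enum_uniq // => i j.
rewrite !tnth_mktuple => E; apply: val_inj; apply: (uniq_map_iota (Hu c cc)) => //.
- exact: ltn_ord.
- exact: ltn_ord.
exact: vt_inj (Hb c cc i (ltn_ord i)) (Hb c cc j (ltn_ord j)) E.
Qed.

Lemma cyc_edge (C : eqType) n (x0 : 'I_n) (vtx : C -> nat -> nat) c e :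
  e \in cyc x0 vtx c -> exists2 i, i < 8 & e = [set vt x0 (vtx c i); vt x0 (vtx c (nxt i))].
Proof. by rewrite cycE => /existsP [i /eqP ->]; exists i. Qed.

Lemma epair_ownS (C : Type) (own : nat -> nat -> C) x y a b :
  epair x y a b -> ownS own a b = ownS own x y.
Proof. by case/orP => /andP [/eqP-> /eqP->] //; rewrite /ownS minnC maxnC. Qed.

Lemma epair_sym x y a b : epair x y a b = epair a b x y.
Proof. by apply/idP/idP; rewrite /epair => /orP [] /andP [/eqP-> /eqP->]; rewrite !eqxx ?orbT. Qed.

Lemma own_edge (C : eqType) n (x0 : 'I_n) codes vtx own L0 (H : @fam_ok C n codes vtx own L0) c d e :
  c \in codes -> d \in codes -> e \in cyc x0 vtx c -> e \in cyc x0 vtx d -> c = d.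
Proof.
case: H => Hb _ Ho _ _ cc dc /cyc_edge [i hi ->] /cyc_edge [j hj /eqP].
rewrite set2_vt ?Hb ?nxt_lt // => /epair_ownS E.
by rewrite -(Ho c cc i hi) -(Ho d dc j hj) E.
Qed.

Lemma fam_disj (C : eqType) n (x0 : 'I_n) codes vtx own L0 (H : @fam_ok C n codes vtx own L0) c d :
  c \in codes -> d \in codes -> c != d -> [disjoint cyc x0 vtx c & cyc x0 vtx d].
Proof.
move=> cc dc ncd; apply/pred0P => e /=; apply/negbTE/negP => /andP [e1 e2].
by rewrite (own_edge H cc dc e1 e2) eqxx in ncd.
Qed.

Lemma fam_mem (C : eqType) n (x0 : 'I_n) vtx (codes : seq C) (D : {set {set 'I_n}}) :
  D \in fam x0 vtx codes -> exists2 c, c \in codes & D = cyc x0 vtx c.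
Proof. by rewrite inE => /mapP. Qed.

Lemma fam_in (C : eqType) n (x0 : 'I_n) vtx (codes : seq C) c :
  c \in codes -> cyc x0 vtx c \in fam x0 vtx codes.
Proof. by move=> cc; rewrite inE; apply: map_f. Qed.

Lemma fam_packing (C : eqType) n (x0 : 'I_n) codes vtx own L0 (H : @fam_ok C n codes vtx own L0) :
  is_packing (fam x0 vtx codes).
Proof.
split.
  by move=> D /fam_mem [c cc ->]; apply: (fam_cyc8 _ H).
move=> D1 D2 /fam_mem [c cc ->] /fam_mem [d dc ->] ne.
apply: (@fam_disj C n x0 codes vtx own L0 H c d cc dc).
by apply: contraNneq ne => ->.
Qed.

Lemma nxt_neq i : i < 8 -> nxt i != i.
Proof. rewrite /nxt => h; apply/eqP; lia. Qed.

Lemma vt_val n (x0 : 'I_n) (X : 'I_n) : vt x0 X = X.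
Proof. by rewrite /vt valKd. Qed.

Lemma fam_cover (C : eqType) n (x0 : 'I_n) codes vtx own L0 (H : @fam_ok C n codes vtx own L0) :
  \bigcup_(D in fam x0 vtx codes) D = Kedges n :\: L0set x0 L0.
Proof.
have H' := H; case: H' => Hb Hu Ho Hc HL.
apply/setP => e; apply/bigcupP/idP.
- case=> D /fam_mem [c cc ->] ec.
  have [i hi Ee] := cyc_edge ec.
  have ha := Hb c cc i hi; have hb := Hb c cc _ (nxt_lt i).
  rewrite !inE; apply/andP; split.
  + apply/negP; rewrite ?inE => /mapP [p pL Ep].
    have [p12 p2n pn] := HL p pL.
    move: Ep; rewrite Ee => /eqP; rewrite set2_vt // ?(ltn_trans p12) // epair_sym.
    move/(epair_ownS own); rewrite (Ho c cc i hi) /ownS (minn_idPl (ltnW p12)) (maxn_idPr (ltnW p12)).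
    by move=> E; rewrite -E cc in pn.
  + rewrite Ee cards2; case: (vt x0 (vtx c i) =P vt x0 (vtx c (nxt i))) => // E0; have E := vt_inj ha hb E0.
    have := uniq_map_iota (Hu c cc) hi (nxt_lt i) E.
    by move/eqP; rewrite eq_sym (negbTE (nxt_neq hi)).
- have key : forall x y, x < y -> y < n -> [set vt x0 x; vt x0 y] \notin [seq [set vt x0 p.1; vt x0 p.2] | p <- L0] ->
      exists2 D, D \in fam x0 vtx codes & [set vt x0 x; vt x0 y] \in D.
    move=> x y xy yn nL.
    have nL' : (x, y) \notin L0.
      apply: contra nL => xyL; apply/mapP; by exists (x, y).
    have [oc [i hi Ep]] := Hc x y xy yn nL'.
    exists (cyc x0 vtx (own x y)); first exact: fam_in.
    rewrite cycE; apply/existsP; exists (Ordinal hi) => /=.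
    by rewrite set2_vt ?(ltn_trans xy) ?Hb ?nxt_lt.
  rewrite !inE => /andP [nL /cards2P [X [Y [nXY EXY]]]].
  move: nL; rewrite EXY -(vt_val x0 X) -(vt_val x0 Y).
  have [XY|YX|XY] := ltngtP X Y.
  + by apply: key.
  + by rewrite setUC; apply: key.
  + by move: nXY; rewrite (val_inj XY) eqxx.
Qed.

Lemma L0set_sub (C : eqType) n (x0 : 'I_n) codes vtx own L0 (H : @fam_ok C n codes vtx own L0) :
  L0set x0 L0 \subset Kedges n.
Proof.
case: H => _ _ _ _ HL; apply/subsetP => e; rewrite inE => /mapP [p pL ->].
have [p12 p2n _] := HL p pL; rewrite inE cards2.
case: (vt x0 p.1 =P vt x0 p.2) => // E0.
have E := vt_inj (ltn_trans p12 p2n) p2n E0; by rewrite E ltnn in p12.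
Qed.

Lemma card_L0set (C : eqType) n (x0 : 'I_n) codes vtx own L0 (H : @fam_ok C n codes vtx own L0) :
  uniq L0 -> #|L0set x0 L0| = size L0.
Proof.
case: H => _ _ _ _ HL uL; rewrite /L0set cardsE (card_uniqP _) ?size_map //.
rewrite map_inj_in_uniq // => p q pL qL /eqP.
have [p12 p2n _] := HL p pL; have [q12 q2n _] := HL q qL.
rewrite set2_vt ?(ltn_trans p12) ?(ltn_trans q12) //.
case/orP => /andP [/eqP E1 /eqP E2].
  by case: p q {pL qL p12 p2n q12 q2n} E1 E2 => a b [c d] /= -> ->.
move: p12 q12; rewrite -E1 -E2 => h1 h2; by have := ltn_trans h2 h1; rewrite ltnn.
Qed.

Lemma fam_leave (C : eqType) n (x0 : 'I_n) codes vtx own L0 (H : @fam_ok C n codes vtx own L0) :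
  leave (fam x0 vtx codes) = L0set x0 L0.
Proof.
apply/setP => e; rewrite /leave (fam_cover x0 H) !inE.
have := subsetP (L0set_sub x0 H) e; rewrite !inE.
case: (e \in [seq [set vt x0 p.1; vt x0 p.2] | p <- L0]) => /=.
  by move=> /(_ isT) ->.
by case: (#|e| == 2).
Qed.

Lemma vsetE (C : eqType) n (x0 : 'I_n) (vtx : C -> nat -> nat) c x :
  (x \in vset (cyc x0 vtx c)) = has (fun v => x == vt x0 v) [seq vtx c i | i <- iota 0 8].
Proof.
apply/bigcupP/hasP.
- case=> e /cyc_edge [i hi ->]; rewrite !inE => /orP [] /eqP ->.
  + by exists (vtx c i) => //; apply: map_f; rewrite mem_iota.
  + by exists (vtx c (nxt i)) => //; apply: map_f; rewrite mem_iota nxt_lt.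
- case=> v /mapP [i]; rewrite mem_iota /= => hi -> /eqP ->.
  exists [set vt x0 (vtx c i); vt x0 (vtx c (nxt i))]; last by rewrite !inE eqxx.
  by rewrite cycE; apply/existsP; exists (Ordinal hi).
Qed.

Definition pickf (C : eqType) n (x0 : 'I_n) (c0 : C) (codes : seq C) vtx vtxQ
  (D : {set {set 'I_n}}) : {set {set 'I_n}} :=
  cyc x0 vtxQ (nth c0 codes (find (fun c => cyc x0 vtx c == D) codes)).

Lemma pickfE (C : eqType) n (x0 : 'I_n) (c0 : C) codes vtx own vtxQ L0
  (H : @fam_ok C n codes vtx own L0) c :
  c \in codes -> pickf x0 c0 codes vtx vtxQ (cyc x0 vtx c) = cyc x0 vtxQ c.
Proof.
move=> cc; rewrite /pickf.
set a := (fun d => cyc x0 vtx d == cyc x0 vtx c).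
have ha : has a codes by apply/hasP; exists c => //; rewrite /a eqxx.
have := nth_find c0 ha; rewrite /a => /eqP E.
have c'c : nth c0 codes (find a codes) \in codes by apply: mem_nth; rewrite -has_find.
have e0 : [set vt x0 (vtx c 0); vt x0 (vtx c (nxt 0))] \in cyc x0 vtx c.
  by rewrite cycE; apply/existsP; exists ord0.
by rewrite (own_edge H c'c cc _ e0) // E.
Qed.

Lemma framework (C : eqType) n (x0 : 'I_n) (codes : seq C) (c0 : C) vtx own vtxQ ownQ L0 :
  fam_ok n codes vtx own L0 -> fam_ok n codes vtxQ ownQ L0 -> uniq L0 ->
  (forall c, c \in codes -> forall v,
     (v \in [seq vtx c i | i <- iota 0 8]) = (v \in [seq vtxQ c i | i <- iota 0 8])) ->
  (forall c, c \in codes -> forall i j, i < 8 -> j < 8 ->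
     ~~ epair (vtx c i) (vtx c (nxt i)) (vtxQ c j) (vtxQ c (nxt j))) ->
  [/\ is_packing (fam x0 vtx codes), #|leave (fam x0 vtx codes)| = size L0
    & almost_2perfect (fam x0 vtx codes)].
Proof.
move=> H HQ uL Hv Hd.
split; first exact: fam_packing H.
  by rewrite (fam_leave x0 H) (card_L0set x0 H).
exists (pickf x0 c0 codes vtx vtxQ); split.
- move=> D /fam_mem [c cc ->]; rewrite (pickfE _ _ _ H cc); split.
    exact: (fam_cyc8 x0 HQ cc).
  split.
    apply/setP => x; rewrite !vsetE; apply: eq_has_r => v; by rewrite Hv.
  apply/pred0P => e /=; apply/negbTE/negP => /andP [/cyc_edge [j hj Ej] /cyc_edge [i hi Ei]].
  case: H => Hb _ _ _ _; case: HQ => HbQ _ _ _ _.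
  move: Ei; rewrite Ej => /eqP; rewrite set2_vt ?Hb ?HbQ ?nxt_lt // epair_sym => E.
  by have := Hd c cc i j hi hj; rewrite E.
- split.
    move=> D1 D2 /fam_mem [c cc ->] /fam_mem [d dc ->] ne.
    rewrite (pickfE _ _ _ H cc) (pickfE _ _ _ H dc); apply: (fam_disj x0 HQ cc dc).
    by apply: contraNneq ne => ->.
  have -> : [set pickf x0 c0 codes vtx vtxQ D | D in fam x0 vtx codes] = fam x0 vtxQ codes.
    apply/setP => D; apply/imsetP/idP.
    - case=> D' /fam_mem [c cc ->] ->; rewrite (pickfE _ _ _ H cc); exact: fam_in.
    - move/fam_mem => [c cc ->]; exists (cyc x0 vtx c); first exact: fam_in.
      by rewrite (pickfE _ _ _ H cc).
  by rewrite (fam_leave x0 H) (fam_leave x0 HQ).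
Qed.


Definition P21 : seq (seq nat) :=
  [:: [:: 16; 7; 12; 5; 0; 10; 8; 20];
     [:: 17; 8; 13; 1; 0; 6; 9; 16];
     [:: 18; 9; 14; 2; 0; 7; 10; 17];
     [:: 19; 10; 15; 3; 0; 8; 6; 18];
     [:: 20; 6; 11; 4; 0; 9; 7; 19];
     [:: 9; 15; 18; 3; 11; 5; 16; 2];
     [:: 10; 11; 19; 4; 12; 1; 17; 3];
     [:: 6; 12; 20; 5; 13; 2; 18; 4];
     [:: 7; 13; 16; 1; 14; 3; 19; 5];
     [:: 8; 14; 17; 2; 15; 4; 20; 1];
     [:: 17; 11; 15; 7; 3; 12; 10; 20];
     [:: 18; 12; 11; 8; 4; 13; 6; 16];
     [:: 19; 13; 12; 9; 5; 14; 7; 17];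
     [:: 20; 14; 13; 10; 1; 15; 8; 18];
     [:: 16; 15; 14; 6; 2; 11; 9; 19];
     [:: 5; 8; 16; 0; 15; 13; 17; 6];
     [:: 1; 9; 17; 0; 11; 14; 18; 7];
     [:: 2; 10; 18; 0; 12; 15; 19; 8];
     [:: 3; 6; 19; 0; 13; 11; 20; 9];
     [:: 4; 7; 20; 0; 14; 12; 16; 10];
     [:: 11; 1; 19; 12; 8; 9; 4; 16];
     [:: 12; 2; 20; 13; 9; 10; 5; 17];
     [:: 13; 3; 16; 14; 10; 6; 1; 18];
     [:: 14; 4; 17; 15; 6; 7; 2; 19];
     [:: 15; 5; 18; 11; 7; 8; 3; 20]].
Definition Q21 : seq (seq nat) :=
  [:: [:: 16; 10; 5; 8; 7; 0; 20; 12];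
     [:: 17; 6; 1; 9; 8; 0; 16; 13];
     [:: 18; 7; 2; 10; 9; 0; 17; 14];
     [:: 19; 8; 3; 6; 10; 0; 18; 15];
     [:: 20; 9; 4; 7; 6; 0; 19; 11];
     [:: 9; 3; 15; 16; 11; 2; 18; 5];
     [:: 10; 4; 11; 17; 12; 3; 19; 1];
     [:: 6; 5; 12; 18; 13; 4; 20; 2];
     [:: 7; 1; 13; 19; 14; 5; 16; 3];
     [:: 8; 2; 14; 20; 15; 1; 17; 4];
     [:: 17; 3; 20; 7; 10; 11; 12; 15];
     [:: 18; 4; 16; 8; 6; 12; 13; 11];
     [:: 19; 5; 17; 9; 7; 13; 14; 12];
     [:: 20; 1; 18; 10; 8; 14; 15; 13];
     [:: 16; 2; 19; 6; 9; 15; 11; 14];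
     [:: 5; 0; 13; 8; 17; 16; 6; 15];
     [:: 1; 0; 14; 9; 18; 17; 7; 11];
     [:: 2; 0; 15; 10; 19; 18; 8; 12];
     [:: 3; 0; 11; 6; 20; 19; 9; 13];
     [:: 4; 0; 12; 7; 16; 20; 10; 14];
     [:: 11; 8; 1; 12; 4; 19; 16; 9];
     [:: 12; 9; 2; 13; 5; 20; 17; 10];
     [:: 13; 10; 3; 14; 1; 16; 18; 6];
     [:: 14; 6; 4; 15; 2; 17; 19; 7];
     [:: 15; 7; 5; 11; 3; 18; 20; 8]].
Definition P17 : seq (seq nat) :=
  [:: [:: 8; 0; 10; 9; 13; 11; 14; 2];
     [:: 9; 1; 11; 10; 14; 12; 15; 3];
     [:: 10; 2; 12; 11; 15; 13; 16; 4];
     [:: 11; 3; 13; 12; 16; 14; 0; 5];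
     [:: 12; 4; 14; 13; 0; 15; 1; 6];
     [:: 13; 5; 15; 14; 1; 16; 2; 7];
     [:: 14; 6; 16; 15; 2; 0; 3; 8];
     [:: 15; 7; 0; 16; 3; 1; 4; 9];
     [:: 16; 8; 1; 0; 4; 2; 5; 10];
     [:: 0; 9; 2; 1; 5; 3; 6; 11];
     [:: 1; 10; 3; 2; 6; 4; 7; 12];
     [:: 2; 11; 4; 3; 7; 5; 8; 13];
     [:: 3; 12; 5; 4; 8; 6; 9; 14];
     [:: 4; 13; 6; 5; 9; 7; 10; 15];
     [:: 5; 14; 7; 6; 10; 8; 11; 16];
     [:: 6; 15; 8; 7; 11; 9; 12; 0];
     [:: 7; 16; 9; 8; 12; 10; 13; 1]].
Definition Q17 : seq (seq nat) :=
  [:: [:: 8; 10; 2; 9; 14; 13; 0; 11];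
     [:: 9; 11; 3; 10; 15; 14; 1; 12];
     [:: 10; 12; 4; 11; 16; 15; 2; 13];
     [:: 11; 13; 5; 12; 0; 16; 3; 14];
     [:: 12; 14; 6; 13; 1; 0; 4; 15];
     [:: 13; 15; 7; 14; 2; 1; 5; 16];
     [:: 14; 16; 8; 15; 3; 2; 6; 0];
     [:: 15; 0; 9; 16; 4; 3; 7; 1];
     [:: 16; 1; 10; 0; 5; 4; 8; 2];
     [:: 0; 2; 11; 1; 6; 5; 9; 3];
     [:: 1; 3; 12; 2; 7; 6; 10; 4];
     [:: 2; 4; 13; 3; 8; 7; 11; 5];
     [:: 3; 5; 14; 4; 9; 8; 12; 6];
     [:: 4; 6; 15; 5; 10; 9; 13; 7];
     [:: 5; 7; 16; 6; 11; 10; 14; 8];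
     [:: 6; 8; 0; 7; 12; 11; 15; 9];
     [:: 7; 9; 1; 8; 13; 12; 16; 10]].

Definition L0 : seq (nat * nat) :=
  [:: (1,2); (1,3); (1,4); (1,5); (2,3); (2,4); (2,5); (3,4); (3,5); (4,5)].

Definition base_own (B : seq (seq nat)) (x y : nat) : nat :=
  find (fun cy => has (fun i => epair x y (nth 0 cy i) (nth 0 cy (nxt i))) (iota 0 8)) B.

Definition bv (T : seq (seq nat)) j i := nth 0 (nth [::] T j) i.

Definition tab_ok (T : seq (seq nat)) (m V : nat) (L : seq (nat * nat)) : bool :=
  [&& size T == m,
      all (fun cy => (size cy == 8) && uniq cy && all (fun v => v < V) cy) T,
      all (fun j => all (fun i => base_own T (minn (bv T j i) (bv T j (nxt i)))
                                             (maxn (bv T j i) (bv T j (nxt i))) == j) (iota 0 8)) (iota 0 m),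
      all (fun x => all (fun y => (x < y) ==> (((x, y) \in L) || (base_own T x y < m))) (iota 0 V)) (iota 0 V) &
      all (fun p => base_own T p.1 p.2 == m) L ].

Definition pair_ok (T Q : seq (seq nat)) (m : nat) : bool :=
  all (fun j => perm_eq (nth [::] T j) (nth [::] Q j) &&
     all (fun i => all (fun i' => ~~ epair (bv T j i) (bv T j (nxt i)) (bv Q j i') (bv Q j (nxt i')))
       (iota 0 8)) (iota 0 8)) (iota 0 m).

Lemma tabP21 : tab_ok P21 25 21 L0. Proof. by vm_compute. Qed.
Lemma tabQ21 : tab_ok Q21 25 21 L0. Proof. by vm_compute. Qed.
Lemma tabP17 : tab_ok P17 17 17 [::]. Proof. by vm_compute. Qed.
Lemma tabQ17 : tab_ok Q17 17 17 [::]. Proof. by vm_compute. Qed.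
Lemma pair21 : pair_ok P21 Q21 25. Proof. by vm_compute. Qed.
Lemma pair17 : pair_ok P17 Q17 17. Proof. by vm_compute. Qed.

Lemma tab_cyc T m V L j : tab_ok T m V L -> j < m ->
  [/\ size (nth [::] T j) = 8, uniq (nth [::] T j) & all (fun v => v < V) (nth [::] T j)].
Proof.
case/and5P => /eqP sT /allP H _ _ _ jm.
have jT : j < size T by rewrite sT.
have := H _ (mem_nth [::] jT) => /andP [/andP [/eqP s8 u] a].
by [].
Qed.

Lemma map_bv T j (s8 : size (nth [::] T j) = 8) : [seq bv T j i | i <- iota 0 8] = nth [::] T j.
Proof. by rewrite -(mkseq_nth 0 (nth [::] T j)) s8. Qed.

Lemma tab_bound T m V L j i : tab_ok T m V L -> j < m -> i < 8 -> bv T j i < V.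
Proof.
move=> tk jm hi; have [s8 _ /allP a] := tab_cyc tk jm.
by apply: a; apply: mem_nth; rewrite s8.
Qed.

Lemma tab_uniq T m V L j : tab_ok T m V L -> j < m -> uniq [seq bv T j i | i <- iota 0 8].
Proof. by move=> tk jm; have [s8 u _] := tab_cyc tk jm; rewrite map_bv. Qed.

Lemma tab_own T m V L j i : tab_ok T m V L -> j < m -> i < 8 ->
  base_own T (minn (bv T j i) (bv T j (nxt i))) (maxn (bv T j i) (bv T j (nxt i))) = j.
Proof.
case/and5P => _ _ /allP H _ _ jm hi.
have := H j; rewrite mem_iota jm => /(_ isT) /allP /(_ i); rewrite mem_iota hi.
by move=> /(_ isT) /eqP.
Qed.

Lemma base_own_edge T x y : base_own T x y < size T ->
  exists2 i, i < 8 & epair x y (bv T (base_own T x y) i) (bv T (base_own T x y) (nxt i)).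
Proof.
rewrite /base_own -has_find => h; have := nth_find [::] h.
by case/hasP => i; rewrite mem_iota /= => hi e; exists i.
Qed.

Lemma tab_cov T m V L x y : tab_ok T m V L -> x < y -> y < V -> (x, y) \notin L ->
  base_own T x y < m /\
  exists2 i, i < 8 & epair x y (bv T (base_own T x y) i) (bv T (base_own T x y) (nxt i)).
Proof.
case/and5P => /eqP sT _ _ /allP H _ xy yV nL.
have xV : x < V by apply: ltn_trans yV.
have := H x; rewrite mem_iota xV => /(_ isT) /allP /(_ y); rewrite mem_iota yV xy (negbTE nL) /=.
move=> /(_ isT) h; split => //; apply: base_own_edge; by rewrite sT.
Qed.

Lemma tab_L T m V L p : tab_ok T m V L -> p \in L -> base_own T p.1 p.2 = m.
Proof. by case/and5P => _ _ _ _ /allP H /H /eqP. Qed.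

Lemma pair_mem T Q m V L j : tab_ok T m V L -> tab_ok Q m V L -> pair_ok T Q m -> j < m ->
  forall v, (v \in [seq bv T j i | i <- iota 0 8]) = (v \in [seq bv Q j i | i <- iota 0 8]).
Proof.
move=> tT tQ /allP pk jm v.
have [s8 _ _] := tab_cyc tT jm; have [s8' _ _] := tab_cyc tQ jm.
rewrite (map_bv s8) (map_bv s8').
have := pk j; rewrite mem_iota jm => /(_ isT) /andP [pe _].
by apply: perm_mem.
Qed.

Lemma pair_dis T Q m j i i' : pair_ok T Q m -> j < m -> i < 8 -> i' < 8 ->
  ~~ epair (bv T j i) (bv T j (nxt i)) (bv Q j i') (bv Q j (nxt i')).
Proof.
move=> /allP pk jm hi hi'.
have := pk j; rewrite mem_iota jm => /(_ isT) /andP [_ /allP /(_ i)].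
rewrite mem_iota hi => /(_ isT) /allP /(_ i'); rewrite mem_iota hi'.
by move=> /(_ isT).
Qed.


Definition blk (v : nat) := (v - 5) %/ 16.
Definition blkg (g : nat) := (g - 1) %/ 4.
Definition loc (b v : nat) := if v == 0 then 0 else v - (16 * b + 4).
Definition lift (b u : nat) := if u == 0 then 0 else u + (16 * b + 4).
Definition code := (nat * nat * nat * nat)%type.

Definition dd (r s : nat) := ((r + 4 - s) %% 4) %/ 2.

Definition own_gen (T21 T17 : seq (seq nat)) (sw : bool) (x y : nat) : code :=
  if (x == 0) || (blk x == blk y) then
    (if blk y == 0 then (0, 0, 0, base_own T21 x y)
     else (1, blk y, 0, base_own T17 (loc (blk y) x) (loc (blk y) y)))
  else (2, (x - 1) %/ 4, (y - 1) %/ 4,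
        if sw then 1 - dd ((x - 1) %% 4) ((y - 1) %% 4) else dd ((x - 1) %% 4) ((y - 1) %% 4)).

Definition vtx_gen (T21 T17 : seq (seq nat)) (sw : bool) (c : code) (i : nat) : nat :=
  let: (t, a, b, j) := c in
  if t == 0 then bv T21 j i
  else if t == 1 then lift a (bv T17 j i)
  else if odd i then 4 * b + 1 + ((i./2 + 2 * (if sw then 1 - j else j)) %% 4)
  else 4 * a + 1 + i./2.

Lemma own0 T21 T17 sw x y : x < y -> y < 21 -> own_gen T21 T17 sw x y = (0, 0, 0, base_own T21 x y).
Proof.
move=> xy y21; rewrite /own_gen.
have -> : blk y = 0 by rewrite /blk; lia.
have -> : (x == 0) || (blk x == 0) by rewrite /blk; apply/orP; right; apply/eqP; lia.
by [].
Qed.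

Lemma lift_inj b : injective (lift b).
Proof. move=> u w; rewrite /lift; case: eqP; case: eqP; lia. Qed.

Lemma lift_bound b u : u <= 16 -> lift b u <= 16 * b + 20.
Proof. rewrite /lift; case: eqP; lia. Qed.

Lemma own1 T21 T17 sw b u w : 0 < b -> u < w -> w <= 16 ->
  own_gen T21 T17 sw (lift b u) (lift b w) = (1, b, 0, base_own T17 u w).
Proof.
move=> b0 uw w16.
have ew : lift b w = w + (16 * b + 4) by rewrite /lift; case: eqP; lia.
have bw : blk (lift b w) = b by rewrite ew /blk; lia.
rewrite /own_gen bw.
have -> : (lift b u == 0) || (blk (lift b u) == b).
  case: (u) uw => [|u'] uw'; first by rewrite /lift eqxx.
  rewrite /lift /blk /=; apply/eqP; lia.
have -> : (b == 0) = false by apply/eqP; lia.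
congr (_, _, _, base_own T17 _ _); rewrite /loc /lift.
  by case: (u) => [|u'] //=; lia.
by case: (w) uw => [|w'] //=; lia.
Qed.

Lemma own2 T21 T17 sw g h r s : g < h -> blkg g != blkg h -> r < 4 -> s < 4 ->
  own_gen T21 T17 sw (4 * g + 1 + r) (4 * h + 1 + s) =
  (2, g, h, if sw then 1 - dd r s else dd r s).
Proof.
move=> gh bgh r4 s4; rewrite /own_gen.
have -> : (4 * g + 1 + r == 0) || (blk (4 * g + 1 + r) == blk (4 * h + 1 + s)) = false.
  apply/negbTE; rewrite negb_or; apply/andP; split; first by apply/eqP; lia.
  move: bgh; rewrite /blk /blkg; apply: contra => /eqP E; apply/eqP; lia.
have -> : (4 * g + 1 + r - 1) %/ 4 = g by lia.
have -> : (4 * h + 1 + s - 1) %/ 4 = h by lia.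
have -> : (4 * g + 1 + r - 1) %% 4 = r by lia.
have -> : (4 * h + 1 + s - 1) %% 4 = s by lia.
by [].
Qed.

Definition v2 (g h jj i : nat) :=
  if odd i then 4 * h + 1 + ((i./2 + 2 * jj) %% 4) else 4 * g + 1 + i./2.

Lemma vtx_gen2 T21 T17 sw g h j i :
  vtx_gen T21 T17 sw (2, g, h, j) i = v2 g h (if sw then 1 - j else j) i.
Proof. by []. Qed.

Lemma ownS_sym (C : Type) (own : nat -> nat -> C) a b : ownS own a b = ownS own b a.
Proof. by rewrite /ownS minnC maxnC. Qed.

Lemma ownS2 T21 T17 sw g h r s : g < h -> blkg g != blkg h -> r < 4 -> s < 4 ->
  ownS (own_gen T21 T17 sw) (4 * g + 1 + r) (4 * h + 1 + s) =
  (2, g, h, if sw then 1 - dd r s else dd r s).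
Proof.
move=> gh bgh r4 s4; rewrite /ownS.
have -> : minn (4 * g + 1 + r) (4 * h + 1 + s) = 4 * g + 1 + r by apply/minn_idPl; lia.
have -> : maxn (4 * g + 1 + r) (4 * h + 1 + s) = 4 * h + 1 + s by apply/maxn_idPr; lia.
exact: own2.
Qed.

Lemma L2own T21 T17 sw g h jj i : g < h -> blkg g != blkg h -> jj < 2 -> i < 8 ->
  ownS (own_gen T21 T17 sw) (v2 g h jj i) (v2 g h jj (nxt i)) = (2, g, h, if sw then 1 - jj else jj).
Proof.
move=> gh bgh jj2 hi.
case: jj jj2 => [|[|jj]] // _;
case: i hi => [|[|[|[|[|[|[|[|i]]]]]]]] // _; rewrite /v2 /nxt /=;
  rewrite ?(ownS_sym _ (4 * h + 1 + _)) ownS2 //.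
Qed.

Lemma L2cov g h r s : r < 4 -> s < 4 ->
  exists2 i, i < 8 & epair (4 * g + 1 + r) (4 * h + 1 + s) (v2 g h (dd r s) i) (v2 g h (dd r s) (nxt i)).
Proof.
case: r => [|[|[|[|r]]]] // _; case: s => [|[|[|[|s]]]] // _;
  [exists 0|exists 7|exists 0|exists 7|exists 1|exists 2|exists 1|exists 2|exists 4|exists 3|exists 4|exists 3|exists 5|exists 6|exists 5|exists 6] => //;
  rewrite /epair /v2 /nxt /dd /=; lia.
Qed.

Lemma L2uniq g h jj : g < h -> jj < 2 -> uniq [seq v2 g h jj i | i <- iota 0 8].
Proof. by move=> gh; case: jj => [|[|jj]] // _; rewrite /v2 /= !inE; lia. Qed.

Lemma L2bound g h jj i : g < h -> i < 8 -> v2 g h jj i < 4 * h + 5.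
Proof.
move=> gh; case: i => [|[|[|[|[|[|[|[|i]]]]]]]] // _; rewrite /v2 /=; try lia;
  by have := ltn_pmod (_ + 2 * jj) (isT : 0 < 4); lia.
Qed.

Lemma L2mem g h jj v : jj < 2 ->
  (v \in [seq v2 g h jj i | i <- iota 0 8]) = (v \in [seq v2 g h (1 - jj) i | i <- iota 0 8]).
Proof.
by case: jj => [|[|jj]] // _; rewrite /v2 /= !inE; apply/idP/idP; lia.
Qed.

Lemma lift_mono b u w : u <= w -> lift b u <= lift b w.
Proof. rewrite /lift; case: (u) => [|u'] /=; case: (w) => [|w'] //=; lia. Qed.

Lemma lift_minn b u w : minn (lift b u) (lift b w) = lift b (minn u w).
Proof.
case: (leqP u w) => h.
  have h' := lift_mono b h.
  lia.
have h' := lift_mono b (ltnW h).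
lia.
Qed.

Lemma lift_maxn b u w : maxn (lift b u) (lift b w) = lift b (maxn u w).
Proof.
case: (leqP u w) => h.
  have h' := lift_mono b h.
  lia.
have h' := lift_mono b (ltnW h).
lia.
Qed.

Lemma epair_lift b x y u w : epair (lift b x) (lift b y) (lift b u) (lift b w) = epair x y u w.
Proof. by rewrite /epair !(inj_eq (@lift_inj b)). Qed.

Lemma mem_map_lift b (s : seq nat) v : (lift b v \in map (lift b) s) = (v \in s).
Proof. by rewrite mem_map //; apply: lift_inj. Qed.


Definition valid (k : nat) (c : code) : bool :=
  let: (t, a, b, j) := c in
  [|| [&& t == 0, a == 0, b == 0 & j < 25],
      [&& t == 1, 0 < a, a < k, b == 0 & j < 17] |
      [&& t == 2, a < b, b < 4 * k + 1, blkg a != blkg b & j < 2]].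

Definition allc (k : nat) : seq code :=
  [seq (x, j) | x <- [seq (y, b) | y <- [seq (t, a) | t <- iota 0 3, a <- iota 0 (4 * k + 1)],
                                   b <- iota 0 (4 * k + 1)], j <- iota 0 25].

Definition codes (k : nat) : seq code := [seq c <- allc k | valid k c].

Lemma mem_pairs (A B : eqType) (s : seq A) (t : seq B) x y :
  ((x, y) \in [seq (a, b) | a <- s, b <- t]) = (x \in s) && (y \in t).
Proof.
apply/allpairsP/andP => [[[a b] /= [ha hb [-> ->]]] | [hx hy]] //.
by exists (x, y).
Qed.

Lemma valid_bounds k (t a b j : nat) : valid k (t, a, b, j) ->
  (t < 0 + 3) && (a < 0 + (4 * k + 1)) && (b < 0 + (4 * k + 1)) && (j < 0 + 25).
Proof. rewrite /valid => /or3P [/and4P []|/and5P []|/and5P []]; intros; lia. Qed.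

Lemma mem_codes k c : (c \in codes k) = valid k c.
Proof.
case: c => [[[t a] b] j]; rewrite mem_filter.
case V: (valid k _) => //=; rewrite !mem_pairs !mem_iota /=.
exact: valid_bounds V.
Qed.

Lemma codes_cases k c : c \in codes k ->
  [\/ exists2 j, j < 25 & c = (0, 0, 0, j),
      exists b j, [/\ 0 < b, b < k, j < 17 & c = (1, b, 0, j)] |
      exists g h j, [/\ g < h, h < 4 * k + 1, blkg g != blkg h, j < 2 & c = (2, g, h, j)]].
Proof.
rewrite mem_codes; case: c => [[[t a] b] j].
rewrite /valid => /or3P [/and4P [/eqP -> /eqP -> /eqP -> hj]|/and5P [/eqP -> ha hk /eqP -> hj]|
                         /and5P [/eqP -> hab hb hbl hj]].
- by apply: Or31; exists j.
- by apply: Or32; exists a, j.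
- by apply: Or33; exists a, b, j.
Qed.

Lemma jsw (sw : bool) j : j < 2 -> (if sw then 1 - (if sw then 1 - j else j) else (if sw then 1 - j else j)) = j.
Proof. by case: sw; case: j => [|[|j]]. Qed.

Lemma jsw_lt (sw : bool) j : j < 2 -> (if sw then 1 - j else j) < 2.
Proof. by case: sw; case: j => [|[|j]]. Qed.

Lemma dd_lt r s : dd r s < 2.
Proof. rewrite /dd; have := ltn_pmod (r + 4 - s) (isT : 0 < 4); lia. Qed.

Lemma blk_blkg x : 0 < x -> blk x = blkg ((x - 1) %/ 4).
Proof. rewrite /blk /blkg; lia. Qed.

Lemma gen_ok k T21 T17 (sw : bool) : 0 < k -> tab_ok T21 25 21 L0 -> tab_ok T17 17 17 [::] ->
  fam_ok (16 * k + 5) (codes k) (vtx_gen T21 T17 sw) (own_gen T21 T17 sw) L0.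
Proof.
move=> k0 t21 t17; split.
- move=> c /codes_cases [[j hj ->]|[b [j [b0 bk hj ->]]]|[g [h [j [gh hk bgh hj ->]]]]] i hi.
  + by have := tab_bound t21 hj hi; rewrite /vtx_gen /=; lia.
  + have := tab_bound t17 hj hi; rewrite /vtx_gen /= => hv.
    have := lift_bound b (_ : bv T17 j i <= 16); lia.
  + by rewrite vtx_gen2; have := L2bound (if sw then 1 - j else j) gh hi; lia.
- move=> c /codes_cases [[j hj ->]|[b [j [b0 bk hj ->]]]|[g [h [j [gh hk bgh hj ->]]]]].
  + exact: tab_uniq t21 hj.
  + have -> : [seq vtx_gen T21 T17 sw (1, b, 0, j) i | i <- iota 0 8] =
               map (lift b) [seq bv T17 j i | i <- iota 0 8] by rewrite -map_comp.
    rewrite map_inj_uniq; first exact: tab_uniq t17 hj.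
    exact: lift_inj.
  + rewrite (eq_map (vtx_gen2 T21 T17 sw g h j)); apply: L2uniq => //; exact: jsw_lt.
- move=> c /codes_cases [[j hj ->]|[b [j [b0 bk hj ->]]]|[g [h [j [gh hk bgh hj ->]]]]] i hi.
  + rewrite /vtx_gen /= /ownS.
    have ne : bv T21 j i != bv T21 j (nxt i).
      apply/eqP => E; have := uniq_map_iota (tab_uniq t21 hj) hi (nxt_lt i) E.
      by move/eqP; rewrite eq_sym (negbTE (nxt_neq hi)).
    have b1 := tab_bound t21 hj hi; have b2 := tab_bound t21 hj (nxt_lt i).
    rewrite own0; [by rewrite (tab_own t21 hj hi) | lia | lia].
  + rewrite /vtx_gen /= /ownS lift_minn lift_maxn.
    have ne : bv T17 j i != bv T17 j (nxt i).
      apply/eqP => E; have := uniq_map_iota (tab_uniq t17 hj) hi (nxt_lt i) E.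
      by move/eqP; rewrite eq_sym (negbTE (nxt_neq hi)).
    have b1 := tab_bound t17 hj hi; have b2 := tab_bound t17 hj (nxt_lt i).
    rewrite own1; [by rewrite (tab_own t17 hj hi) | by [] | lia | lia].
  + rewrite !vtx_gen2 L2own ?jsw ?jsw_lt //.
- move=> x y xy yn nL.
  case A: ((x == 0) || (blk x == blk y)).
  + case B0: (blk y == 0).
    * have y21 : y < 21 by move: B0; rewrite /blk; lia.
      rewrite own0 //; have [jl [i hi ep]] := tab_cov t21 xy y21 nL.
      split; last by exists i.
      by rewrite mem_codes; apply/or3P; apply: Or31; apply/and4P; split.
    * move Eb: (blk y) A B0 => b A B0; rewrite /blk in Eb.
      have b0 : 0 < b by move: B0; case: (b).
      have bk : b < k by lia.
      have yw : y = lift b (y - (16 * b + 4)) by rewrite /lift; case: eqP; lia.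
      have w16 : y - (16 * b + 4) <= 16 by lia.
      have [u [xu uw]] : exists u, x = lift b u /\ u < y - (16 * b + 4).
        case/orP: A => [/eqP x0|/eqP bx].
          by exists 0; split; [rewrite x0 | lia].
        move: bx; rewrite /blk => bx.
        exists (x - (16 * b + 4)); split; last by lia.
        by rewrite /lift; case: eqP; lia.
      have w17 : y - (16 * b + 4) < 17 by lia.
      move Ew: (y - (16 * b + 4)) yw w16 uw w17 => w yw w16 uw w17.
      rewrite xu yw own1 //.
      have [jl [i hi ep]] := tab_cov t17 uw w17 (negbT (in_nil _)).
      split.
        by rewrite mem_codes; apply/or3P; apply: Or32; apply/and5P; split.
      by exists i => //; rewrite /vtx_gen /= epair_lift.
  + have xpos : 0 < x by move: A; rewrite lt0n; case: eqP.
    have ypos : 0 < y by lia.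
    move Eg: ((x - 1) %/ 4) => g; move Eh: ((y - 1) %/ 4) => h.
    move Er: ((x - 1) %% 4) => r; move Es: ((y - 1) %% 4) => s.
    have ex : x = 4 * g + 1 + r by lia.
    have ey : y = 4 * h + 1 + s by lia.
    have bgh : blkg g != blkg h.
      move: A; rewrite (blk_blkg xpos) (blk_blkg ypos) Eg Eh => /negbT.
      by rewrite negb_or => /andP [_ H].
    have gh : g < h.
      have : g <= h by lia.
      rewrite leq_eqVlt => /orP [/eqP E|//]; by rewrite E eqxx in bgh.
    have hk : h < 4 * k + 1 by lia.
    have r4 : r < 4 by lia.
    have s4 : s < 4 by lia.
    rewrite ex ey own2 //; split.
      rewrite mem_codes; apply/or3P; apply: Or33; apply/and5P; split => //.
      exact: jsw_lt (dd_lt r s).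
    have [i hi ep] := L2cov g h r4 s4.
    exists i => //; rewrite !vtx_gen2 jsw //; exact: dd_lt.
- move=> p pL; have [p12 p2n] : p.1 < p.2 /\ p.2 < 6.
    by move: pL; rewrite !inE => /or4P [/eqP->|/eqP->|/eqP->|/or3P[/eqP->|/eqP->|/or3P[/eqP->|/eqP->|/or3P[/eqP->|/eqP->|/eqP->]]]].
  split; [by [] | lia |].
  by rewrite own0 ?(tab_L t21 pL) ?mem_codes //; lia.
Qed.


Definition vP := vtx_gen P21 P17 false.
Definition vQ := vtx_gen Q21 Q17 true.

Lemma mem_map_eq (f : nat -> nat) (s1 s2 : seq nat) : s1 =i s2 -> map f s1 =i map f s2.
Proof.
move=> E v; apply/mapP/mapP => [[x hx ->]|[x hx ->]]; exists x => //.
  by rewrite -E. by rewrite E.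
Qed.

Lemma pair_hv k c : c \in codes k -> forall v,
  (v \in [seq vP c i | i <- iota 0 8]) = (v \in [seq vQ c i | i <- iota 0 8]).
Proof.
move=> /codes_cases [[j hj ->]|[b [j [b0 bk hj ->]]]|[g [h [j [gh hk bgh hj ->]]]]] v.
- exact: pair_mem tabP21 tabQ21 pair21 hj v.
- rewrite /vP /vQ.
  have -> : [seq vtx_gen P21 P17 false (1, b, 0, j) i | i <- iota 0 8] = map (lift b) [seq bv P17 j i | i <- iota 0 8]
    by rewrite -map_comp.
  have -> : [seq vtx_gen Q21 Q17 true (1, b, 0, j) i | i <- iota 0 8] = map (lift b) [seq bv Q17 j i | i <- iota 0 8]
    by rewrite -map_comp.
  apply: mem_map_eq => w; exact: pair_mem tabP17 tabQ17 pair17 hj w.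
- rewrite /vP /vQ.
  have -> : [seq vtx_gen P21 P17 false (2, g, h, j) i | i <- iota 0 8] = [seq v2 g h j i | i <- iota 0 8]
    by apply: eq_map => i; rewrite vtx_gen2.
  have -> : [seq vtx_gen Q21 Q17 true (2, g, h, j) i | i <- iota 0 8] = [seq v2 g h (1 - j) i | i <- iota 0 8]
    by apply: eq_map => i; rewrite vtx_gen2.
  exact: L2mem.
Qed.

Lemma pair_hd k c : c \in codes k -> forall i j, i < 8 -> j < 8 ->
  ~~ epair (vP c i) (vP c (nxt i)) (vQ c j) (vQ c (nxt j)).
Proof.
move=> /codes_cases [[jj hj ->]|[b [jj [b0 bk hj ->]]]|[g [h [jj [gh hk bgh hj ->]]]]] i j hi hj'.
- exact: pair_dis pair21 hj hi hj'.
- rewrite /vP /vQ /vtx_gen /= epair_lift; exact: pair_dis pair17 hj hi hj'.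
- rewrite /vP /vQ !vtx_gen2 /=; apply/negP => /(epair_ownS (own_gen P21 P17 false)).
  rewrite !L2own //; last by case: (jj) hj => [|[|]].
  by case: (jj) hj => [|[|]].
Qed.

Theorem lemma3p3 (n : nat) :
  n %% 16 = 5 -> 21 <= n ->
  exists P : {set {set {set 'I_n}}},
    is_packing P /\ is_maximum P /\ almost_2perfect P.
Proof.
move=> nm n21.
move Ek: (n %/ 16) => k.
have En : n = 16 * k + 5 by rewrite {1}(divn_eq n 16) nm Ek mulnC.
have k0 : 0 < k by lia.
have n0 : 0 < n by lia.
pose x0 : 'I_n := Ordinal n0.
have H := gen_ok false k0 tabP21 tabP17; rewrite -En in H.
have HQ := gen_ok true k0 tabQ21 tabQ17; rewrite -En in HQ.
have uL : uniq L0 by [].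
have [pk cl a2] := framework x0 (0, 0, 0, 0) H HQ uL (@pair_hv k) (@pair_hd k).
exists (fam x0 (vtx_gen P21 P17 false) (codes k)); split; [by [] | split; last by []].
split => // P' HP'; rewrite cl.
have on : odd n by rewrite En oddD oddM.
have Cm : 'C(n, 2) %% 8 = 2.
  rewrite bin2 En.
  have -> : (16 * k + 5) * (16 * k + 5).-1 = (8 * (16 * k * k + 9 * k + 1) + 2).*2.
    rewrite -mul2n; nia.
  rewrite doubleK; lia.
exact: lower HP' on Cm.
Qed.
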